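(* Let $p$ be a prime, $a\ge 1$ an integer, and $n=p^a$. With $L$ and $R$ the matrices indexed by $P(n)$ defined in the context, \[\dim\ker (RL^{-1}) \ge \binom{a}{2}=\frac{a(a-1)}{2}.\]
   Context: Let $\phi$ denote Euler's totient function. For a positive integer $n$ let $P(n)=\{(i,j): j\mid n,\ i\mid j\}$. Define square matrices $L$ and $R$ with rows and columns indexed by $P(n)$ as follows. For a row index $(i,j)$ and a column index $(d,c)$: $L_{(i,j)}^{(d,c)} = \phi(d)\,\frac{n}{\operatorname{lcm}(j,c)}$ if $d\mid i$ and $j\mid \operatorname{lcm}(i,c)$, and $0$ otherwise. For the row $(i,j)$, let $v$ be the largest divisor of $i$ coprime with $j/i$ and put $u=i/v$. Then $R_{(i,j)}^{(e,c)} = u\,\phi(ev/j)\,\frac{n}{\operatorname{lcm}(j,c)}$ if $(j/v)\mid e$, $e\mid j$ and $j\mid\operatorname{lcm}(i,c)$, and $0$ otherwise. The matrix $L$ is invertible. *)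

(* Defs.v *)
From mathcomp Require Import all_boot all_order all_algebra.
Set Implicit Arguments. Unset Strict Implicit. Unset Printing Implicit Defensive.
Import GRing.Theory Num.Theory.

Definition Pn (n : nat) : seq (nat * nat) :=
  [seq (i, j) | j <- divisors n, i <- divisors j].

Definition Pidx (n : nat) (k : nat) : nat * nat := nth (0, 0) (Pn n) k.

Definition vpart (i m : nat) : nat :=
  \max_(d <- divisors i | coprime d m) d.

Definition Lentry (n : nat) (r col : nat * nat) : nat :=
  let: (i, j) := r in let: (d, c) := col in
  if (d %| i) && (j %| lcmn i c) then totient d * (n %/ lcmn j c) else 0.

Definition Rentry (n : nat) (r col : nat * nat) : nat :=
  let: (i, j) := r in let: (e, c) := col in
  let v := vpart i (j %/ i) in
  let u := i %/ v in
  if [&& (j %/ v) %| e, e %| j & j %| lcmn i c]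
  then u * totient (e * v %/ j) * (n %/ lcmn j c) else 0.

Definition Lmx (n : nat) : 'M[rat]_(size (Pn n)) :=
  \matrix_(r, s) ((Lentry n (Pidx n r) (Pidx n s))%:R)%R.

Definition Rmx (n : nat) : 'M[rat]_(size (Pn n)) :=
  \matrix_(r, s) ((Rentry n (Pidx n r) (Pidx n s))%:R)%R.

(* Main.v *)
Require Import Defs.
From mathcomp Require Import all_boot all_order all_algebra zify.

Section NT.
Variable p : nat.
Hypothesis pp : prime p.
Let p1 : 1 < p. Proof. exact: prime_gt1. Qed.
Let p0 : 0 < p. Proof. exact: prime_gt0. Qed.

Lemma divisors_pexp m : divisors (p ^ m) = [seq p ^ i | i <- iota 0 m.+1].
Proof.
apply: (@irr_sorted_eq _ ltn); first exact: ltn_trans.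
- exact: ltnn.
- exact: sorted_divisors_ltn.
- rewrite sorted_map; apply: sub_sorted (iota_ltn_sorted 0 m.+1).
  by move=> x y /=; rewrite ltn_exp2l.
move=> d; rewrite -dvdn_divisors ?expn_gt0 ?p0 //.
apply/dvdn_pfactor/mapP => // -[i].
  by move=> im ->; exists i; rewrite // mem_iota.
by rewrite mem_iota => /andP[_ im] ->; exists i.
Qed.

Lemma memPn a x : x \in Pn (p ^ a) -> exists s t, [/\ s <= t, t <= a & x = (p ^ s, p ^ t)].
Proof.
case/allpairsPdep => j [i [hj hi ->]].
move: hj; rewrite divisors_pexp => /mapP[t]; rewrite mem_iota => /andP[_ ta] ej.
move: hi; rewrite ej divisors_pexp => /mapP[s]; rewrite mem_iota => /andP[_ st] ->.
by exists s, t; split.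
Qed.

Lemma vpart1 m : vpart 1 m = 1.
Proof. by rewrite /vpart (_ : divisors 1 = [:: 1]) // big_cons big_nil coprime1n. Qed.

Lemma vpartp s k : 0 < k -> vpart (p ^ s) (p ^ k) = 1.
Proof.
move=> k0; rewrite /vpart divisors_pexp big_map /= big_cons /= coprime1n.
rewrite big1_seq ?maxn0 // => i /andP[] + /[!mem_iota] /andP[i0 _].
by rewrite coprime_pexpl // coprime_pexpr // prime_coprime // dvdnn.
Qed.

Lemma lcm_dvd s t r : s < t -> (p ^ t %| lcmn (p ^ s) (p ^ r)) = (p ^ t %| p ^ r).
Proof.
move=> st; case: (leqP r s) => rs.
  rewrite (lcmn_idPl (dvdn_exp2l _ rs)).
  by rewrite !dvdn_Pexp2l // leqNgt st leqNgt (leq_ltn_trans rs st).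
by rewrite (lcmn_idPr (dvdn_exp2l _ (ltnW rs))).
Qed.
End NT.
Section C.
Variable p : nat.
Hypothesis pp : prime p.
Definition bad (x : nat * nat) := (1 < x.1) && (x.1 < x.2).

Lemma cnt_inner t : count (fun s => (0 < s) && (s < t)) (iota 0 t.+1) = t.-1.
Proof.
case: t => [|t]; first by [].
rewrite -(addn1 t.+1) iotaD count_cat add0n.
have -> : count (fun s => (0 < s) && (s < t.+1)) [:: t.+1] = 0 by rewrite /= ltnn.
rewrite addn0 (iotaD 0 1 t) count_cat add0n.
have -> : count (fun s => (0 < s) && (s < t.+1)) (iota 0 1) = 0 by [].
rewrite add0n (eq_in_count (a2 := predT)) ?count_predT ?size_iota // => x.
by rewrite mem_iota => /andP[x0 xt] /=; rewrite x0 xt.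
Qed.

Lemma sum_pred a : sumn [seq t.-1 | t <- iota 0 a.+1] = 'C(a, 2).
Proof.
elim: a => // a IH; rewrite -(addn1 a.+1) iotaD map_cat sumn_cat IH /=.
by rewrite addn0 binS bin1 addnC.
Qed.

Lemma count_bad a : count bad (Pn (p ^ a)) = 'C(a, 2).
Proof.
rewrite /Pn count_flatten divisors_pexp // -map_comp -sum_pred -map_comp.
congr sumn; apply: eq_map => t /=.
rewrite divisors_pexp // -map_comp count_map -cnt_inner; apply: eq_count => s /=.
by rewrite /bad /= -{1}(expn0 p) !ltn_exp2l // prime_gt1.
Qed.
End C.
Section Row.
Variable p : nat.
Hypothesis pp : prime p.
Lemma Rrow n s t e r : 0 < s -> s < t ->
  Rentry n (p ^ s, p ^ t) (e, p ^ r) = p ^ s * Rentry n (1, p ^ t) (e, p ^ r).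
Proof.
move=> s0 st; rewrite /Rentry.
rewrite -expnB ?prime_gt0 ?(ltnW st) // vpartp ?subn_gt0 // divn1 vpart1 !divn1 lcm1n.
rewrite lcm_dvd //.
by case: ifP => _; rewrite ?muln0 // mul1n mulnA.
Qed.
End Row.
Lemma rank_bound (F : fieldType) N (R : 'M[F]_N) (B : pred 'I_N) (g : 'I_N -> 'I_N) (c : 'I_N -> F) :
  (forall k, B k -> ~~ B (g k) /\ row k R = (c k *: row (g k) R)%R) ->
  \rank R <= \sum_(k < N | ~~ B k) 1.
Proof.
move=> H.
have sub : (R <= \sum_(k | ~~ B k) <<row k R>>)%MS.
  apply/row_subP=> k; case Bk: (B k).
    have [nB ->] := H k Bk; apply: scalemx_sub.
    by apply: (sumsmx_sup (g k)) => //; rewrite genmxE.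
  by apply: (sumsmx_sup k); rewrite ?Bk ?genmxE.
apply: leq_trans (mxrankS sub) _.
elim/big_ind2: _ => //.
- by rewrite mxrank0.
- move=> M1 n1 M2 n2 h1 h2; apply: leq_trans (mxrank_adds_leqif _ _) _.
  exact: leq_add.
- by move=> k _; rewrite genmxE rank_leq_row.
Qed.

Theorem proposition5p1 (p a : nat) :
  prime p -> 1 <= a ->
  'C(a, 2) <= \rank (kermx (Rmx (p ^ a) *m invmx (Lmx (p ^ a)))).
Proof.
move=> pp _; set n := p ^ a; set N := size (Pn n).
pose B := fun k : 'I_N => bad (Pidx n k).
pose g := fun k : 'I_N => insubd k (index (1, (Pidx n k).2) (Pn n)) : 'I_N.
have inP (k : 'I_N) : Pidx n k \in Pn n by rewrite /Pidx mem_nth.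
have key : forall k, B k -> ~~ B (g k) /\
    row k (Rmx n) = (((Pidx n k).1)%:R *: row (g k) (Rmx n))%R.
  move=> k; rewrite /B.
  have [s [t [st ta E]]] := @memPn p pp _ _ (inP k).
  rewrite E /bad /= => /andP[h1 h2].
  have s0 : 0 < s by move: h1; rewrite -{1}(expn0 p) ltn_exp2l // prime_gt1.
  have st' : s < t by move: h2; rewrite ltn_exp2l // prime_gt1.
  have mem1 : (1, p ^ t) \in Pn n.
    apply/allpairsPdep; exists (p ^ t), 1; split => //.
      by rewrite divisors_pexp //; apply: map_f; rewrite mem_iota.
    by rewrite -dvdn_divisors ?expn_gt0 ?prime_gt0.
  have gE : Pidx n (g k) = (1, p ^ t).
    rewrite /Pidx /g val_insubd E /= index_mem mem1 nth_index //.
  split; first by rewrite gE /bad.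
  apply/rowP => col; rewrite !mxE E gE.
  have [s' [r [_ _ E']]] := @memPn p pp _ _ (inP col).
  by rewrite E' Rrow // GRing.natrM.
have rk := @rank_bound _ _ _ _ _ _ key.
have cnt : \sum_(k < N | B k) 1 = 'C(a, 2).
  by rewrite -(@count_bad p pp a) -sum1_count (big_nth (0, 0)) big_mkord.
have tot : \sum_(k < N | B k) 1 + \sum_(k < N | ~~ B k) 1 = N.
  by rewrite -[RHS]card_ord -sum1_card [RHS](bigID B) /=.
rewrite (mxrank_ker (Rmx n *m invmx (Lmx n))).
have := mxrankM_maxl (Rmx n) (invmx (Lmx n)).
move: rk tot cnt.
set x := \sum_(k < N | B k) 1; set y := \sum_(k < N | ~~ B k) 1.
set r1 := \rank (Rmx n); set r2 := \rank _.
lia.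
Qed.
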